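(* Let $E$ be a Stone space with at least five points. Then the graph $\mathscr{C}(E)$ is connected. Moreover, if $E$ is finite then $\mathscr{C}(E)$ has diameter at most four, while if $E$ is infinite then $\mathscr{C}(E)$ has diameter exactly two.
   Context: A Stone space is a compact, Hausdorff, totally disconnected topological space. A cut of $E$ is an unordered partition of $E$ into two disjoint clopen sets $U,V$, written $U\sqcup V$. A cut is non-peripheral if each of $U$ and $V$ contains at least two points. Two cuts $U\sqcup V$ and $U'\sqcup V'$ cross if all four sets $U\cap U'$, $U\cap V'$, $V\cap U'$, $V\cap V'$ are nonempty; otherwise they are compatible. The complex of cuts $\mathscr{C}(E)$ is the simplicial graph whose vertices are the non-peripheral cuts of $E$, with an edge between two distinct cuts whenever they are compatible. *)

(* Defs.v *)
From mathcomp Require Import all_boot all_order.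
From mathcomp Require Import all_classical all_reals all_analysis.
Set Implicit Arguments. Unset Strict Implicit. Unset Printing Implicit Defensive.
Local Open Scope classical_set_scope.

Definition stone_space (E : topologicalType) : Prop :=
  [/\ compact [set: E], hausdorff_space E & totally_disconnected [set: E]].

(* A cut U ⊔ V is represented by the clopen set U (with V = ~` U).
   The (unordered) cut determined by U equals that determined by U'
   iff U' = U or U' = ~` U. *)
Definition same_cut {E : topologicalType} (U U' : set E) : Prop :=
  U' = U \/ U' = ~` U.

Definition nonperipheral_cut {E : topologicalType} (U : set E) : Prop :=
  [/\ clopen U, clopen (~` U),
      (exists x y, [/\ U x, U y & x <> y]) &
      (exists x y, [/\ (~` U) x, (~` U) y & x <> y])].

Definition cuts_cross {E : topologicalType} (U U' : set E) : Prop :=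
  [/\ U `&` U' !=set0, U `&` ~` U' !=set0,
      ~` U `&` U' !=set0 & ~` U `&` ~` U' !=set0].

Definition cut_adj {E : topologicalType} (U U' : set E) : Prop :=
  [/\ nonperipheral_cut U, nonperipheral_cut U',
      ~ same_cut U U' & ~ cuts_cross U U'].

(* cut_within n U U' : the vertices (cuts) represented by U and U' are at
   distance at most n in the complex of cuts C(E). *)
Fixpoint cut_within {E : topologicalType} (n : nat) (U U' : set E) : Prop :=
  match n with
  | 0 => nonperipheral_cut U /\ same_cut U U'
  | S m => cut_within m U U' \/ exists W, cut_within m U W /\ cut_adj W U'
  end.

Definition cut_complex_connected (E : topologicalType) : Prop :=
  forall U U' : set E, nonperipheral_cut U -> nonperipheral_cut U' ->
    exists n, cut_within n U U'.

Definition cut_complex_diam_le (E : topologicalType) (n : nat) : Prop :=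
  forall U U' : set E, nonperipheral_cut U -> nonperipheral_cut U' ->
    cut_within n U U'.

Definition cut_complex_diam_eq (E : topologicalType) (n : nat) : Prop :=
  cut_complex_diam_le E n /\
  (forall m, (m < n)%N -> ~ cut_complex_diam_le E m).

(* Main.v *)
Require Import Defs.
From mathcomp Require Import all_boot all_order.
From mathcomp Require Import all_classical all_reals all_analysis.
Local Open Scope classical_set_scope.

Lemma normal_sep (E : topologicalType) : hausdorff_space E -> compact [set: E] ->
  forall P R : set E, closed P -> closed R -> P `&` R = set0 ->
  exists U V, [/\ open U, open V, P `<=` U, R `<=` V & U `&` V = set0].
Proof.
move=> hE cE P R cP cR PR.
have nE := compact_normal hE cE.
have snR : set_nbhs P (~` R).
  apply/set_nbhsP; exists (~` R); split => //; first exact: closed_openC.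
  move=> z Pz Rz; have : (P `&` R) z by [].
  by rewrite PR.
have [D snD clD] := nE P cP (~` R) snR.
have [Ob [oOb PO OD]] := (set_nbhsP P D).1 snD.
exists Ob, (~` closure D); split => //.
- exact/closed_openC/closed_closure.
- by move=> z Rz cz; exact: clD _ cz Rz.
- apply/seteqP; split => z // [Oz Cz]; apply: Cz; apply: subset_closure; exact: OD.
Qed.

Lemma stone_zd (E : topologicalType) : stone_space E -> zero_dimensional E.
Proof.
case=> cE hE tdE x y xy.
apply: contrapT => H.
have HQ : forall C, clopen C -> C x -> C y.
  move=> C clC Cx; apply: contrapT => nCy; apply: H; exists C; split => //.
pose Q := \bigcap_(C in [set C : set E | clopen C /\ C x]) C.
have Qx : Q x by move=> C [].
have Qy : Q y by move=> C [clC Cx]; exact: HQ.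
have cQ : closed Q by apply: closed_bigI => C [[_ c] _].
have key : forall P R, closed P -> closed R -> P `&` R = set0 ->
    Q `<=` P `|` R -> P x -> R `&` Q !=set0 -> False.
  move=> P R cP cR PR QPR Px [r [Rr Qr]].
  have [U [V [oU oV PU RV UV]]] := @normal_sep E hE cE P R cP cR PR.
  have [C [clC Cx CUV]] : exists C, [/\ clopen C, C x & C `<=` U `|` V].
    apply: contrapT => NC.
    pose F := filter_from [set C : set E | clopen C /\ C x]
                (fun C => C `&` ~` (U `|` V)).
    have FF : Filter F.
      apply: filter_from_filter.
        by exists setT; split => //; exact: clopenT.
      move=> A B [cA Ax] [cB Bx]; exists (A `&` B).
        by split; [exact: clopenI | by split].
      by move=> z [[Az Bz] nz]; split; split.
    have PF : ProperFilter F.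
      apply: filter_from_proper => C [clC Cx].
      have [[z [Cz nz]] | C0] := pselect (exists z, C z /\ ~ (U `|` V) z).
        by exists z.
      exfalso; apply: NC; exists C; split => // z Cz; apply: contrapT => nz.
      by apply: C0; exists z.
    have [p [_ clp]] := cE F PF filterT.
    have Hp : forall C, clopen C -> C x -> C p /\ ~ (U `|` V) p.
      move=> C clC Cx.
      have cl : closed (C `&` ~` (U `|` V)).
        exact: closedI clC.2 (open_closedC (openU oU oV)).
      apply: cl => B nB.
      apply: (clp (C `&` ~` (U `|` V)) B _ nB).
      by exists C.
    have Qp : Q p by move=> C [clC Cx]; have [] := Hp C clC Cx.
    have [_ nUV] := Hp setT clopenT I.
    apply: nUV; case: (QPR p Qp) => [/PU|/RV]; by [left|right].
  have clCU : clopen (C `&` U).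
    split; first exact: openI clC.1 oU.
    have -> : C `&` U = C `&` ~` V.
      apply/seteqP; split => z [Cz Hz]; split => //.
        move=> Vz; have : (U `&` V) z by []. by rewrite UV.
      by case: (CUV z Cz).
    exact: closedI clC.2 (open_closedC oV).
  have [_ Ur] : (C `&` U) r by apply: Qr; split => //; split => //; exact: PU.
  have : (U `&` V) r by split => //; exact: RV.
  by rewrite UV.
have conQ : connected Q.
  move=> B0 B0n [Ob oOb B0QO] [K cK B0QK].
  apply: contrapT => NB.
  have B0Q : B0 `<=` Q by rewrite B0QO => z [].
  have [z [Qz nB0z]] : exists z, Q z /\ ~ B0 z.
    apply: contrapT => nz; apply: NB; apply/seteqP; split => // w Qw.
    by apply: contrapT => nw; apply: nz; exists w.
  have cB0 : closed B0 by rewrite B0QK; exact: closedI.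
  have cR : closed (Q `&` ~` Ob) by apply: closedI => //; exact: open_closedC.
  have dis : B0 `&` (Q `&` ~` Ob) = set0.
    apply/seteqP; split => w // [Bw [_ nOw]]; apply: nOw.
    by move: Bw; rewrite B0QO => -[].
  have cov : Q `<=` B0 `|` (Q `&` ~` Ob).
    move=> w Qw; have [Ow|nOw] := pselect (Ob w); last by right.
    by left; rewrite B0QO.
  have [Bx|nBx] := pselect (B0 x).
    apply: (key _ _ cB0 cR dis cov Bx); exists z; split => //; split => //.
    by move=> Oz; apply: nB0z; rewrite B0QO.
  apply: (key _ _ cR cB0); first by rewrite setIC.
  - by move=> w /cov [|]; [right|left].
  - by split => // Ox; apply: nBx; rewrite B0QO.
  - by case: B0n => w Bw; exists w; split => //; exact: B0Q.
have : connected_component [set: E] x y.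
  by exists Q.
rewrite tdE // => yx; move: xy; rewrite yx eqxx.
by [].
Qed.


Section Cuts.
Set Implicit Arguments.
Variable E : topologicalType.
Implicit Types U V W : set E.

Lemma npC U : nonperipheral_cut U -> nonperipheral_cut (~` U).
Proof. by case=> a b c d; split => //; rewrite setCK. Qed.

Lemma sameC U V : same_cut (~` U) V <-> same_cut U V.
Proof.
rewrite /same_cut setCK; split => -[] H; by [right|left].
Qed.

Lemma sameCr U V : same_cut U (~` V) <-> same_cut U V.
Proof.
split => -[|] H.
- by right; rewrite -H setCK.
- by left; rewrite -[V]setCK H setCK.
- by right; rewrite H.
- by left; rewrite H setCK.
Qed.

Lemma crossC U V : cuts_cross (~` U) V <-> cuts_cross U V.
Proof. by rewrite /cuts_cross setCK; split => -[a b c d]; split. Qed.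

Lemma crossCr U V : cuts_cross U (~` V) <-> cuts_cross U V.
Proof. by rewrite /cuts_cross setCK; split => -[a b c d]; split. Qed.

Lemma crossS U V : cuts_cross U V -> cuts_cross V U.
Proof. by case=> a b c d; split; rewrite setIC. Qed.

Lemma sameS U V : same_cut U V -> same_cut V U.
Proof. by case=> ->; [left|right; rewrite setCK]. Qed.

Lemma adjS U V : cut_adj U V -> cut_adj V U.
Proof.
case=> a b c d; split => //; first by move/sameS.
by move/crossS.
Qed.

Lemma adjCr W U : cut_adj W (~` U) -> cut_adj W U.
Proof.
case=> a /npC; rewrite setCK => b /sameCr c /crossCr d; by split.
Qed.

Lemma two_step U W U' : nonperipheral_cut U -> cut_adj U W -> cut_adj W U' ->
  cut_within 2 U U'.
Proof.
move=> nU aUW aWU'; right; exists W; split => //.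
by right; exists U; split => //; split => //; left.
Qed.

Lemma piece U U' : nonperipheral_cut U -> nonperipheral_cut U' ->
  (exists a b, [/\ U a, U' a, U b, U' b & a <> b]) ->
  (exists p, U p /\ ~ U' p) -> (exists q, ~ U q /\ U' q) ->
  cut_adj (U `&` U') U.
Proof.
move=> nU nU' [a [b [Ua U'a Ub U'b ab]]] [p [Up nU'p]]
  [q [nUq U'q]].
have [cU cUc _ _] := nU; have [cU' cUc' _ _] := nU'.
have np1 : nonperipheral_cut (U `&` U').
  split.
  - exact: clopenI cU cU'.
  - by apply: (@clopenC _ _ set0); exact: clopenI cU cU'.
  - by exists a, b.
  - exists p, q; split.
    + by case.
    + by case.
    + by move=> pq; apply: nUq; rewrite -pq.
split => //.
- case=> H.
    have [_ ?] : (U `&` U') p by rewrite -H.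
    by apply: nU'p.
  have : (~` (U `&` U')) a by rewrite -H.
  by apply.
- by case=> _ [z [[Uz _] nUz]] _ _; exact: nUz.
Qed.

Lemma cw_mono n U V : cut_within n U V -> cut_within n.+1 U V.
Proof. by left. Qed.

Lemma cross_far U V : cuts_cross U V -> ~ cut_within 1 U V.
Proof.
move=> cUV [[_ [H|H]]|[W [[_ [H|H]] [_ _ _ nc]]]].
- by move: cUV; rewrite H => -[_ [z [? ?]] _ _].
- by move: cUV; rewrite H => -[[z [? ?]] _ _ _].
- by apply: nc; rewrite H.
- by apply: nc; rewrite H; apply/crossC.
Qed.

End Cuts.


Section Main.
Set Implicit Arguments.
Variable E : topologicalType.
Implicit Types U V W : set E.

Lemma diam2 (f : 'I_5 -> E) : injective f -> forall U U',
  nonperipheral_cut U -> nonperipheral_cut U' -> cut_within 2 U U'.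
Proof.
move=> finj U U' nU nU'.
have [s|ns] := pselect (same_cut U U'); first by left; left; split.
have [c|nc] := pselect (cuts_cross U U'); last first.
  by left; right; exists U; split; [split => //; left | split].
case: (c) => [[a1 [Ua1 U'a1]] [a2 [Ua2 nU'a2]] [a3 [nUa3 U'a3]] [a4 [nUa4 nU'a4]]].
have [[b [Ub [U'b ba]]] | N1] := pselect (exists b, U b /\ U' b /\ b <> a1).
  have h1 : cut_adj (U `&` U') U.
    apply: piece nU nU' _ _ _.
    - by exists a1, b; split => // e; apply: ba.
    - by exists a2.
    - by exists a3.
  have h2 : cut_adj (U `&` U') U'.
    rewrite setIC; apply: piece nU' nU _ _ _.
    - by exists a1, b; split => // e; apply: ba.
    - by exists a3.
    - by exists a2.
  exact: two_step nU (adjS h1) h2.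
have [[b [Ub [U'b ba]]] | N2] := pselect (exists b, U b /\ ~ U' b /\ b <> a2).
  have h1 : cut_adj (U `&` ~` U') U.
    apply: piece nU (npC nU') _ _ _.
    - by exists a2, b; split => // e; apply: ba.
    - by exists a1; split => // h; apply: h.
    - by exists a4.
  have h2 : cut_adj (U `&` ~` U') U'.
    apply: adjCr; rewrite setIC; apply: piece (npC nU') nU _ _ _.
    - by exists a2, b; split => // e; apply: ba.
    - by exists a4.
    - by exists a1; split => // h; apply: h.
  exact: two_step nU (adjS h1) h2.
have [[b [Ub [U'b ba]]] | N3] := pselect (exists b, ~ U b /\ U' b /\ b <> a3).
  have h1 : cut_adj (~` U `&` U') U.
    apply: adjCr; apply: piece (npC nU) nU' _ _ _.
    - by exists a3, b; split => // e; apply: ba.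
    - by exists a4.
    - by exists a1; split => // h; apply: h.
  have h2 : cut_adj (~` U `&` U') U'.
    rewrite setIC; apply: piece nU' (npC nU) _ _ _.
    - by exists a3, b; split => // e; apply: ba.
    - by exists a1; split => // h; apply: h.
    - by exists a4.
  exact: two_step nU (adjS h1) h2.
have [[b [Ub [U'b ba]]] | N4] := pselect (exists b, ~ U b /\ ~ U' b /\ b <> a4).
  have h1 : cut_adj (~` U `&` ~` U') U.
    apply: adjCr; apply: piece (npC nU) (npC nU') _ _ _.
    - by exists a4, b; split => // e; apply: ba.
    - by exists a3; split => // h; apply: h.
    - by exists a2; split => // h; apply: h.
  have h2 : cut_adj (~` U `&` ~` U') U'.
    apply: adjCr; rewrite setIC; apply: piece (npC nU') (npC nU) _ _ _.
    - by exists a4, b; split => // e; apply: ba.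
    - by exists a2; split => // h; apply: h.
    - by exists a3; split => // h; apply: h.
  exact: two_step nU (adjS h1) h2.
exfalso.
have pc : forall z w, (U z <-> U w) -> (U' z <-> U' w) -> z = w.
  move=> z w [h1 h2] [h3 h4].
  have [Uz|nUz] := pselect (U z); have [U'z|nU'z] := pselect (U' z).
  - have ez : z = a1 by apply: contrapT => ?; apply: N1; exists z.
    have ew : w = a1.
      by apply: contrapT => ?; apply: N1; exists w; split; [exact: h1|split; [exact: h3|]].
    by rewrite ez ew.
  - have ez : z = a2 by apply: contrapT => ?; apply: N2; exists z.
    have ew : w = a2.
      apply: contrapT => ?; apply: N2; exists w; split; first exact: h1.
      by split => // /h4.
    by rewrite ez ew.
  - have ez : z = a3 by apply: contrapT => ?; apply: N3; exists z.
    have ew : w = a3.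
      apply: contrapT => ?; apply: N3; exists w; split; first by move/h2.
      by split => //; exact: h3.
    by rewrite ez ew.
  - have ez : z = a4 by apply: contrapT => ?; apply: N4; exists z.
    have ew : w = a4.
      apply: contrapT => ?; apply: N4; exists w; split; first by move/h2.
      by split => // /h4.
    by rewrite ez ew.
pose g (i : 'I_5) := (`[< U (f i) >], `[< U' (f i) >]).
have ginj : injective g.
  move=> i j; rewrite /g => -[] e1 e2.
  by apply: finj; apply: pc; apply: asbool_eq_equiv.
have := leq_card g ginj.
by rewrite card_ord card_prod card_bool.
Qed.

Lemma cross_np U U' : clopen U -> clopen U' -> cuts_cross U U' ->
  nonperipheral_cut U /\ nonperipheral_cut U'.
Proof.
move=> cU cU' [[p1 [u1 v1]] [p2 [u2 v2]] [p3 [u3 v3]] [p4 [u4 v4]]].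
have cUc : clopen (~` U) by apply: (@clopenC _ _ set0).
have cUc' : clopen (~` U') by apply: (@clopenC _ _ set0).
split; split => //.
- by exists p1, p2; split => // e; apply: v2; rewrite -e.
- by exists p3, p4; split => // e; apply: v4; rewrite -e.
- by exists p1, p3; split => // e; apply: u3; rewrite -e.
- by exists p2, p4; split => // e; apply: u4; rewrite -e.
Qed.

Lemma cross_exists (f : 'I_5 -> E) : injective f -> zero_dimensional E ->
  exists U U', [/\ nonperipheral_cut U, nonperipheral_cut U' & cuts_cross U U'].
Proof.
move=> finj zd.
have fneq : forall m n (hm : (m < 5)%N) (hn : (n < 5)%N), m != n ->
    f (Ordinal hm) != f (Ordinal hn).
  move=> m n hm hn h; apply/eqP => /finj /(congr1 val) /= e; move: h.
  by rewrite e eqxx.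
pose a := f (@Ordinal 5 0 isT); pose b := f (@Ordinal 5 1 isT).
pose c := f (@Ordinal 5 2 isT); pose d := f (@Ordinal 5 3 isT).
have [Sac [cac ac1 ac2]] := zd a c (@fneq 0 2 isT isT isT).
have [Sad [cad ad1 ad2]] := zd a d (@fneq 0 3 isT isT isT).
have [Sbc [cbc bc1 bc2]] := zd b c (@fneq 1 2 isT isT isT).
have [Sbd [cbd bd1 bd2]] := zd b d (@fneq 1 3 isT isT isT).
have [Sab [cab ab1 ab2]] := zd a b (@fneq 0 1 isT isT isT).
have [Scb [ccb cb1 cb2]] := zd c b (@fneq 2 1 isT isT isT).
have [Scd [ccd cd1 cd2]] := zd c d (@fneq 2 3 isT isT isT).
pose U := (Sac `&` Sad) `|` (Sbc `&` Sbd).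
pose U' := (Sab `&` Sad) `|` (Scb `&` Scd).
have cU : clopen U by apply: clopenU; apply: clopenI.
have cU' : clopen U' by apply: clopenU; apply: clopenI.
have cr : cuts_cross U U'.
  split.
  - by exists a; split; left.
  - by exists b; split; [right|case=> -[]].
  - by exists c; split; [case=> -[]|right].
  - by exists d; split; case=> -[].
have [nU nU'] := cross_np cU cU' cr.
by exists U, U'.
Qed.

End Main.
Unset Implicit Arguments.

Theorem mainTheorem2 (E : topologicalType) :
  stone_space E ->
  (exists f : 'I_5 -> E, injective f) ->
  [/\ cut_complex_connected E,
      finite_set [set: E] -> cut_complex_diam_le E 4
    & infinite_set [set: E] -> cut_complex_diam_eq E 2].
Proof.
move=> st [f finj].
have d2 := diam2 finj.
split.
- by move=> U U' nU nU'; exists 2; exact: d2.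
- by move=> _ U U' nU nU'; do 2 apply: cw_mono; exact: d2.
- move=> _; split; first by move=> U U' nU nU'; exact: d2.
  move=> m m2 Hm.
  have [U [U' [nU nU' cr]]] := cross_exists finj (@stone_zd E st).
  apply: (cross_far cr).
  move: m2; case: m Hm => [|[|m]] Hm // _.
    exact: cw_mono (Hm U U' nU nU').
  exact: Hm.
Qed.
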